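(* Let $N\ge1$, $\varepsilon>0$, and let $(b_m)_{m\le N}$ be complex numbers. Let $f$ be a smooth function on $\mathbb R$ such that for some $X>0$ and $Y\ge N^{\varepsilon}$, for $|y|\le2$, $$f(0)=0,\qquad f'(0)=X,\qquad f^{(j+1)}(y)\ll XY^{-j}\ \ (j\ge1).$$ Then there is a nonnegative Schwartz-class function $q$, depending only on $\varepsilon$ and the implied constants in these hypotheses, satisfying $x^jq^{(j)}(x)\ll_{j,C}(1+|x|)^{-C}$, such that $$\int_{-1}^1\Big|\sum_{m\le N}b_me(mf(y))\Big|^2dy\le\int_{\mathbb R}q(y)\Big|\sum_{m\le N}b_me(mXy)\Big|^2dy+O\Big(N^{-100}\sum_{m\le N}|b_m|^2\Big).$$
   Context: $e(x)=e^{2\pi ix}$. *)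

(* Defs.v *)
From Stdlib Require Import Reals.
From Coquelicot Require Import Coquelicot.
Open Scope R_scope.

Definition e (x : R) : C := (cos (2 * PI * x), sin (2 * PI * x)).

Definition expsum (N : nat) (b : nat -> C) (g : R) : C :=
  sum_n_m (G := C_AbelianMonoid) (fun m => Cmult (b m) (e (INR m * g))) 1 N.

Definition l2sq (N : nat) (b : nat -> C) : R :=
  sum_n_m (G := R_AbelianMonoid) (fun m => (Cmod (b m))^2) 1 N.

Definition smooth (f : R -> R) : Prop := forall n x, ex_derive_n f n x.

Definition schwartz (q : R -> R) : Prop :=
  smooth q /\ forall j k : nat, exists K, forall x, Rabs (x ^ k * Derive_n q j x) <= K.

(* Main.v *)
Require Import Defs.
From Stdlib Require Import Reals Lra Lia Psatz List FunctionalExtensionality Classical.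
From Coquelicot Require Import Coquelicot.
Open Scope R_scope.

Fixpoint peval (l : list R) (x : R) : R :=
  match l with nil => 0 | a :: l' => a + x * peval l' x end.
Fixpoint padd (l1 l2 : list R) : list R :=
  match l1, l2 with
  | nil, _ => l2
  | _, nil => l1
  | a :: l1', c :: l2' => (a + c) :: padd l1' l2'
  end.
Fixpoint pscal (c : R) (l : list R) : list R :=
  match l with nil => nil | a :: l' => (c * a) :: pscal c l' end.
Fixpoint pder (l : list R) : list R :=
  match l with nil => nil | a :: l' => padd l' (0 :: pder l') end.

Lemma peval_add l1 l2 x : peval (padd l1 l2) x = peval l1 x + peval l2 x.
Proof.
  revert l2; induction l1 as [|a l1 IH]; intros [|c l2]; simpl; try ring.
  rewrite IH; ring.
Qed.
Lemma peval_scal c l x : peval (pscal c l) x = c * peval l x.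
Proof. induction l as [|a l IH]; simpl; [ring|]. rewrite IH; ring. Qed.

Lemma deriv_mult_R (f g : R -> R) x df dg :
  is_derive f x df -> is_derive g x dg -> is_derive (fun y => f y * g y) x (df * g x + f x * dg).
Proof.
  intros Hf Hg. apply is_derive_Reals. apply is_derive_Reals in Hf. apply is_derive_Reals in Hg.
  apply (derivable_pt_lim_mult f g x df dg Hf Hg).
Qed.
Lemma deriv_plus_R (f g : R -> R) x df dg :
  is_derive f x df -> is_derive g x dg -> is_derive (fun y => f y + g y) x (df + dg).
Proof.
  intros Hf Hg. apply is_derive_Reals. apply is_derive_Reals in Hf. apply is_derive_Reals in Hg.
  apply (derivable_pt_lim_plus f g x df dg Hf Hg).
Qed.
Lemma deriv_ext_val (f : R -> R) x d d' : is_derive f x d -> d = d' -> is_derive f x d'.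
Proof. intros H ->; exact H. Qed.

Lemma peval_der l x : is_derive (peval l) x (peval (pder l) x).
Proof.
  induction l as [|a l IH]; simpl.
  - apply (is_derive_const 0 x).
  - rewrite peval_add. simpl.
    eapply deriv_ext_val.
    + apply (deriv_plus_R (fun _ => a) (fun y => y * peval l y)).
      apply is_derive_const. apply deriv_mult_R. apply is_derive_id. apply IH.
    + unfold one, zero; simpl; ring.
Qed.

Definition pstep (l : list R) := padd (pder l) (pscal (-2) (0 :: l)).
Definition gauss (l : list R) (x : R) := peval l x * exp (- (x * x)).

Lemma gauss_der l x : is_derive (gauss l) x (gauss (pstep l) x).
Proof.
  unfold gauss, pstep. rewrite peval_add, peval_scal. simpl.
  eapply deriv_ext_val.
  - apply deriv_mult_R. apply peval_der.
    apply is_derive_Reals. apply (derivable_pt_lim_comp (fun y => - (y*y)) exp).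
    apply is_derive_Reals. eapply deriv_ext_val. apply (is_derive_opp (fun y => y * y)).
    apply deriv_mult_R; apply is_derive_id. reflexivity.
    apply derivable_pt_lim_exp.
  - unfold one, opp; simpl. ring.
Qed.

Lemma exp_le_mono a b : a <= b -> exp a <= exp b.
Proof. intros [H|H]. left; apply exp_increasing; auto. subst; lra. Qed.

Lemma peval_bound l : exists c, 0 <= c /\ forall x, Rabs (peval l x) <= c * (1 + Rabs x) ^ length l.
Proof.
  induction l as [|a l [c [Hc IH]]]; simpl.
  - exists 0. split. lra. intros; rewrite Rabs_R0; lra.
  - exists (Rabs a + c). split. pose proof (Rabs_pos a); lra.
    intros x. pose proof (Rabs_pos x) as Hx. pose proof (IH x) as Hp.
    assert (H1 : 1 <= (1 + Rabs x) ^ length l) by (apply pow_R1_Rle; lra).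
    eapply Rle_trans. apply Rabs_triang. rewrite Rabs_mult.
    pose proof (Rabs_pos (peval l x)).
    assert (Rabs x * Rabs (peval l x) <= Rabs x * (c * (1 + Rabs x) ^ length l)) by
      (apply Rmult_le_compat_l; lra).
    pose proof (Rabs_pos a).
    set (P := (1 + Rabs x) ^ length l) in *.
    assert (Rabs a * 1 <= Rabs a * ((1 + Rabs x) * P)) by (apply Rmult_le_compat_l; nra).
    nra.
Qed.

Lemma exp_pow_nat t m : exp (INR m * t) = exp t ^ m.
Proof.
  induction m. simpl; rewrite Rmult_0_l; apply exp_0.
  rewrite S_INR. replace ((INR m + 1) * t) with (INR m * t + t) by ring.
  rewrite exp_plus, IHm. simpl; ring.
Qed.

Lemma poly_exp_bound m : exists K, forall x, (1 + Rabs x) ^ m * exp (- (x * x)) <= K.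
Proof.
  exists (exp (INR m * INR m / 4)). intros x.
  set (t := Rabs x).
  assert (Ht : 0 <= t) by apply Rabs_pos.
  assert (xx : x * x = t * t) by (unfold t; rewrite <- Rabs_mult; rewrite Rabs_pos_eq; nra).
  rewrite xx.
  assert (H1 : (1 + t) ^ m <= exp t ^ m) by (apply pow_incr; split; [lra| apply exp_ineq1_le]).
  rewrite <- exp_pow_nat in H1.
  eapply Rle_trans. apply Rmult_le_compat_r. left; apply exp_pos. exact H1.
  rewrite <- exp_plus. apply exp_le_mono.
  assert (0 <= (t - INR m / 2) ^ 2) by (apply pow2_ge_0). nra.
Qed.

Lemma gauss_bound l n : exists K, forall x, Rabs (gauss l x) * (1 + Rabs x) ^ n <= K.
Proof.
  destruct (peval_bound l) as [c [Hc Hp]].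
  destruct (poly_exp_bound (length l + n)) as [K HK].
  exists (c * K). intros x. unfold gauss. rewrite Rabs_mult, (Rabs_pos_eq (exp _)) by (left; apply exp_pos).
  specialize (Hp x). specialize (HK x). rewrite pow_add in HK.
  pose proof (exp_pos (- (x*x))).
  assert (0 <= (1 + Rabs x) ^ n) by (apply pow_le; pose proof (Rabs_pos x); lra).
  assert (0 <= (1 + Rabs x) ^ length l) by (apply pow_le; pose proof (Rabs_pos x); lra).
  pose proof (Rabs_pos (peval l x)).
  assert (Rabs (peval l x) * exp (- (x * x)) * (1 + Rabs x) ^ n <=
          c * (1 + Rabs x) ^ length l * exp (- (x * x)) * (1 + Rabs x) ^ n).
  { apply Rmult_le_compat_r; auto. apply Rmult_le_compat_r; lra. }
  nra.
Qed.

Definition qf := gauss (120 :: nil).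
Definition Plist (j : nat) := Nat.iter j pstep (120 :: nil).

Lemma Derive_n_q j : Derive_n qf j = gauss (Plist j).
Proof.
  induction j. reflexivity.
  apply functional_extensionality; intro x. simpl. rewrite IHj.
  apply is_derive_unique. apply gauss_der.
Qed.

Lemma qf_nonneg x : 0 <= qf x.
Proof. unfold qf, gauss; simpl. pose proof (exp_pos (- (x*x))). nra. Qed.

Lemma qf_smooth : smooth qf.
Proof.
  intros n x. destruct n. exact I. simpl. rewrite Derive_n_q. eexists. apply gauss_der.
Qed.

Lemma qf_schwartz : schwartz qf.
Proof.
  split. apply qf_smooth. intros j k.
  destruct (gauss_bound (Plist j) k) as [K HK]. exists K. intros x.
  rewrite Derive_n_q, Rabs_mult, <- RPow_abs.
  eapply Rle_trans; [|apply (HK x)]. rewrite Rmult_comm. apply Rmult_le_compat_l.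
  apply Rabs_pos. apply pow_incr. pose proof (Rabs_pos x); lra.
Qed.

Lemma qf_decay : forall (j : nat) (Cc : R), exists K, forall x,
        Rabs (x ^ j * Derive_n qf j x) <= K * Rpower (1 + Rabs x) (- Cc).
Proof.
  intros j Cc. destruct (INR_archimed 1 Cc) as [n Hn]; [lra|].
  destruct (gauss_bound (Plist j) (j + n)) as [K HK]. exists K. intros x.
  pose proof (Rabs_pos x) as Hx.
  assert (Hb : 0 < (1 + Rabs x) ^ n) by (apply pow_lt; lra).
  rewrite Derive_n_q, Rabs_mult, <- RPow_abs.
  specialize (HK x). rewrite pow_add in HK.
  assert (HP : Rpower (1 + Rabs x) (- INR n) <= Rpower (1 + Rabs x) (- Cc))
    by (apply Rle_Rpower; lra).
  rewrite Rpower_Ropp, Rpower_pow in HP by lra.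
  assert (H1 : Rabs x ^ j <= (1 + Rabs x) ^ j) by (apply pow_incr; lra).
  pose proof (Rabs_pos (gauss (Plist j) x)).
  assert (H2 : Rabs x ^ j * Rabs (gauss (Plist j) x) <= K / (1 + Rabs x) ^ n).
  { unfold Rdiv. apply (Rmult_le_reg_r ((1 + Rabs x) ^ n)); auto.
    replace (K * / (1 + Rabs x) ^ n * (1 + Rabs x) ^ n) with K by (field; lra).
    
    assert (0 <= Rabs x ^ j) by (apply pow_le; lra).
    assert (Rabs x ^ j * Rabs (gauss (Plist j) x) <= (1 + Rabs x) ^ j * Rabs (gauss (Plist j) x))
      by (apply Rmult_le_compat_r; lra).
    nra. }
  assert (0 <= K).
  { eapply Rle_trans; [|exact HK]. apply Rmult_le_pos; auto. apply Rmult_le_pos; apply pow_le; lra. }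
  eapply Rle_trans. exact H2. unfold Rdiv. apply Rmult_le_compat_l; auto.
Qed.

Fixpoint SR (b : nat -> C) (n : nat) (u : R) : R :=
  match n with O => 0 | S k => SR b k u +
    (fst (b (S k)) * cos (2 * PI * (INR (S k) * u)) - snd (b (S k)) * sin (2 * PI * (INR (S k) * u))) end.
Fixpoint SI (b : nat -> C) (n : nat) (u : R) : R :=
  match n with O => 0 | S k => SI b k u +
    (fst (b (S k)) * sin (2 * PI * (INR (S k) * u)) + snd (b (S k)) * cos (2 * PI * (INR (S k) * u))) end.
Fixpoint L2 (b : nat -> C) (n : nat) : R :=
  match n with O => 0 | S k => L2 b k + (fst (b (S k)) * fst (b (S k)) + snd (b (S k)) * snd (b (S k))) end.

Lemma expsum_eq N b u : expsum N b u = (SR b N u, SI b N u).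
Proof.
  induction N.
  - unfold expsum. rewrite sum_n_m_zero by lia. reflexivity.
  - unfold expsum in *. rewrite sum_n_Sm by lia. rewrite IHN.
    unfold plus; simpl. unfold e. destruct (b (S N)) as [br bi]. simpl.
    unfold Cplus, Cmult; simpl. f_equal; ring.
Qed.

Lemma l2sq_eq N b : l2sq N b = L2 b N.
Proof.
  induction N.
  - unfold l2sq. rewrite sum_n_m_zero by lia. reflexivity.
  - unfold l2sq in *. rewrite sum_n_Sm by lia. rewrite IHN.
    unfold plus; simpl. unfold Cmod. rewrite Rmult_1_r, sqrt_sqrt. ring.
    pose proof (pow2_ge_0 (fst (b (S N)))). pose proof (pow2_ge_0 (snd (b (S N)))). lra.
Qed.

Definition hN N b u := SR b N u * SR b N u + SI b N u * SI b N u.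

Lemma hN_eq N b u : (Cmod (expsum N b u)) ^ 2 = hN N b u.
Proof.
  rewrite expsum_eq. unfold Cmod, hN. cbn [fst snd]. rewrite pow2_sqrt. ring. nra.
Qed.

Lemma hN_nonneg N b u : 0 <= hN N b u.
Proof. unfold hN; nra. Qed.

Lemma L2_nonneg b N : 0 <= L2 b N.
Proof. induction N; simpl; nra. Qed.

Lemma hN_CS N b u : hN N b u <= INR N * L2 b N.
Proof.
  unfold hN. induction N.
  - simpl. lra.
  - cbn [SR SI L2].
    set (p := SR b N u) in *. set (r := SI b N u) in *.
    destruct (b (S N)) as [br bi]. cbn [fst snd].
    set (co := cos (2 * PI * (INR (S N) * u))). set (si := sin (2 * PI * (INR (S N) * u))).
    rewrite S_INR.
    assert (Hcs : si * si + co * co = 1) by (unfold si, co; pose proof (sin2_cos2 (2 * PI * (INR (S N) * u))); unfold Rsqr in *; lra).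
    set (c := br * co - bi * si). set (d := br * si + bi * co).
    assert (Hcd : c * c + d * d = br * br + bi * bi) by (unfold c, d; nra).
    pose proof (L2_nonneg b N) as HL.
    pose proof (pos_INR N) as HN.
    set (L := L2 b N) in *.
    assert (Hk : INR N * (2 * (p * c + r * d)) <= INR N * (L + INR N * (c*c + d*d))).
    { assert (0 <= (p - INR N * c) ^ 2 + (r - INR N * d) ^ 2) by (pose proof (pow2_ge_0 (p - INR N * c)); pose proof (pow2_ge_0 (r - INR N * d)); lra).
      nra. }
    destruct (Req_dec (INR N) 0) as [H0|H0].
    + assert (N = 0%nat) by (apply INR_eq; simpl; auto). subst N.
      assert (p = 0) by reflexivity. assert (r = 0) by reflexivity.
      rewrite H0. nra.
    + assert (2 * (p * c + r * d) <= L + INR N * (c*c + d*d)).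
      { apply (Rmult_le_reg_l (INR N)); lra. }
      nra.
Qed.

Lemma cont_SR b n u : continuous (SR b n) u.
Proof.
  revert u; induction n; intro u.
  - simpl. apply continuous_const.
  - simpl. apply (continuous_plus (SR b n) (fun u => (fst (b (S n)) * cos (2 * PI * (INR (S n) * u)) - snd (b (S n)) * sin (2 * PI * (INR (S n) * u))))).
    apply IHn. apply ex_derive_continuous. auto_derive. auto.
Qed.
Lemma cont_SI b n u : continuous (SI b n) u.
Proof.
  revert u; induction n; intro u.
  - simpl. apply continuous_const.
  - simpl. apply (continuous_plus (SI b n) (fun u => (fst (b (S n)) * sin (2 * PI * (INR (S n) * u)) + snd (b (S n)) * cos (2 * PI * (INR (S n) * u))))).
    apply IHn. apply ex_derive_continuous. auto_derive. auto.
Qed.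
Lemma cont_hN N b u : continuous (hN N b) u.
Proof.
  unfold hN.
  apply (continuous_plus (fun u => SR b N u * SR b N u) (fun u => SI b N u * SI b N u)).
  apply (continuous_mult (SR b N) (SR b N)); apply cont_SR.
  apply (continuous_mult (SI b N) (SI b N)); apply cont_SI.
Qed.

Lemma ball_R (l z : R) (eps : R) : Rabs (z - l) < eps -> ball l eps z.
Proof. intros H. unfold ball; simpl. unfold AbsRing_ball, abs, minus, plus, opp; simpl. exact H. Qed.

Lemma tail_p (F : R -> R) (M : R) : (forall x, 0 <= F x) -> (forall x, continuous F x) ->
  (forall b, 0 <= b -> RInt F 0 b <= M) ->
  exists l, is_RInt_gen F (at_point 0) (Rbar_locally p_infty) l /\ (forall b, 0 <= b -> RInt F 0 b <= l).
Proof.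
  intros Fp Fc HM.
  assert (Hex : forall a b, ex_RInt F a b) by (intros a b; exact (@ex_RInt_continuous R_CompleteNormedModule F a b (fun z _ => Fc z))).
  set (E := fun y => exists b, 0 <= b /\ y = RInt F 0 b).
  destruct (completeness E) as [l [Hub Hlub]].
  { exists M. intros y [b [Hb ->]]. auto. }
  { exists (RInt F 0 0). exists 0. split; auto; lra. }
  exists l. split.
  2:{ intros b Hb. apply Hub. exists b; auto. }
  unfold is_RInt_gen, filterlimi, filter_le, filtermapi. intros P [eps HP].
    destruct (classic (exists b0, 0 <= b0 /\ l - eps < RInt F 0 b0)) as [[b0 [Hb0 Hl]]|Hn].
    + apply Filter_prod with (fun x => x = 0) (fun y => b0 < y).
      * reflexivity.
      * exists b0. auto.
      * intros x y -> Hy. simpl. exists (RInt F 0 y). split. exact (@RInt_correct R_CompleteNormedModule F _ _ (Hex _ _)). apply HP. apply ball_R.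
        assert (RInt F 0 y <= l) by (apply Hub; exists y; split; auto; lra).
        rewrite <- (RInt_Chasles F 0 b0 y) by auto.
        assert (0 <= RInt F b0 y) by (apply RInt_ge_0; auto; lra).
        assert (RInt F 0 y = plus (RInt F 0 b0) (RInt F b0 y)) by (rewrite RInt_Chasles; auto).
        unfold plus in *; simpl in *. apply Rabs_def1; lra.
    + exfalso. assert (l <= l - eps).
      { apply Hlub. intros y [b [Hb ->]]. destruct (Rle_dec (RInt F 0 b) (l - eps)); auto.
        exfalso; apply Hn; exists b; split; auto; lra. }
      destruct eps; simpl in *; lra.
Qed.

Lemma tail_m (F : R -> R) (M : R) : (forall x, 0 <= F x) -> (forall x, continuous F x) ->
  (forall a, a <= 0 -> RInt F a 0 <= M) ->
  exists l, is_RInt_gen F (Rbar_locally m_infty) (at_point 0) l /\ (forall a, a <= 0 -> RInt F a 0 <= l).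
Proof.
  intros Fp Fc HM.
  assert (Hex : forall a b, ex_RInt F a b) by (intros a b; exact (@ex_RInt_continuous R_CompleteNormedModule F a b (fun z _ => Fc z))).
  set (E := fun y => exists a, a <= 0 /\ y = RInt F a 0).
  destruct (completeness E) as [l [Hub Hlub]].
  { exists M. intros y [b [Hb ->]]. auto. }
  { exists (RInt F 0 0). exists 0. split; auto; lra. }
  exists l. split.
  2:{ intros b Hb. apply Hub. exists b; auto. }
  unfold is_RInt_gen, filterlimi, filter_le, filtermapi. intros P [eps HP].
    destruct (classic (exists a0, a0 <= 0 /\ l - eps < RInt F a0 0)) as [[a0 [Ha0 Hl]]|Hn].
    + apply Filter_prod with (fun y => y < a0) (fun x => x = 0).
      * exists a0. auto.
      * reflexivity.
      * intros y x Hy ->. simpl. exists (RInt F y 0). split. exact (@RInt_correct R_CompleteNormedModule F _ _ (Hex _ _)). apply HP. apply ball_R.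
        assert (RInt F y 0 <= l) by (apply Hub; exists y; split; auto; lra).
        assert (0 <= RInt F y a0) by (apply RInt_ge_0; auto; lra).
        assert (RInt F y 0 = plus (RInt F y a0) (RInt F a0 0)) by (rewrite RInt_Chasles; auto).
        unfold plus in *; simpl in *. apply Rabs_def1; lra.
    + exfalso. assert (l <= l - eps).
      { apply Hlub. intros y [b [Hb ->]]. destruct (Rle_dec (RInt F b 0) (l - eps)); auto.
        exfalso; apply Hn; exists b; split; auto; lra. }
      destruct eps; simpl in *; lra.
Qed.

Lemma full_int (F : R -> R) (M : R) : (forall x, 0 <= F x) -> (forall x, continuous F x) ->
  (forall a b, a <= 0 <= b -> RInt F a b <= M) ->
  exists I, is_RInt_gen F (Rbar_locally m_infty) (Rbar_locally p_infty) I /\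
    (forall a b, a <= 0 <= b -> RInt F a b <= I).
Proof.
  intros Fp Fc HM.
  assert (Hex : forall a b, ex_RInt F a b) by (intros a b; exact (@ex_RInt_continuous R_CompleteNormedModule F a b (fun z _ => Fc z))).
  assert (Hsplit : forall a b, RInt F a b = RInt F a 0 + RInt F 0 b).
  { intros. rewrite <- (RInt_Chasles F a 0 b) by auto. reflexivity. }
  destruct (tail_p F M) as [l2 [H2 H2b]]; auto.
  { intros b Hb. eapply Rle_trans; [|apply (HM 0 b); lra].
    rewrite (Hsplit 0 b), RInt_point. unfold zero; simpl; lra. }
  destruct (tail_m F M) as [l1 [H1 H1b]]; auto.
  { intros a Ha. eapply Rle_trans; [|apply (HM a 0); lra].
    rewrite (Hsplit a 0), RInt_point. unfold zero; simpl; lra. }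
  exists (plus l1 l2). split.
  - eapply is_RInt_gen_Chasles; eauto.
  - intros a b Hab. rewrite Hsplit. unfold plus; simpl.
    pose proof (H1b a (proj1 Hab)). pose proof (H2b b (proj2 Hab)). lra.
Qed.

Lemma cont_of_der (g : R -> R) x : ex_derive g x -> continuous g x.
Proof. intros H. exact (@ex_derive_continuous R_AbsRing R_NormedModule g x H). Qed.

Lemma RInt_scal_R (g : R -> R) a b c : ex_RInt g a b -> RInt (fun y => c * g y) a b = c * RInt g a b.
Proof. intros H. exact (@RInt_scal R_CompleteNormedModule g a b c H). Qed.

Lemma ex_RInt_cont (g : R -> R) a b : (forall x, continuous g x) -> ex_RInt g a b.
Proof. intros H. exact (@ex_RInt_continuous R_CompleteNormedModule g a b (fun z _ => H z)). Qed.

Lemma RInt_Chasles_R (g : R -> R) a b c : (forall x, continuous g x) -> RInt g a b + RInt g b c = RInt g a c.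
Proof. intros H. exact (@RInt_Chasles R_CompleteNormedModule g a b c (ex_RInt_cont g a b H) (ex_RInt_cont g b c H)). Qed.

Lemma int_bound (F : R -> R) C : 0 <= C -> (forall x, continuous F x) ->
  (forall y, F y <= C / (1 + y^2)) -> forall a b, a <= b -> RInt F a b <= C * PI.
Proof.
  intros HC Fc HF a b Hab.
  assert (Hg : forall x, continuous (fun y => C / (1 + y^2)) x).
  { intros x. apply cont_of_der. auto_derive. nra. }
  eapply Rle_trans. apply RInt_le; auto. apply ex_RInt_cont; auto. apply ex_RInt_cont; eauto.
  intros x _. apply HF.
  assert (Hi : is_RInt (fun y => C / (1 + y^2)) a b (minus (C * atan b) (C * atan a))).
  { apply (@is_RInt_derive R_CompleteNormedModule (fun y => C * atan y)).
    - intros x _. apply is_derive_Reals.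
      replace (C / (1 + x^2)) with (C * / (1 + x^2)) by (unfold Rdiv; ring).
      apply derivable_pt_lim_scal. apply derivable_pt_lim_atan.
    - intros x _. apply Hg. }
  replace (RInt _ a b) with (C * atan b - C * atan a) by (symmetry; apply (is_RInt_unique (V:=R_CompleteNormedModule)); exact Hi).
  pose proof (atan_bound a). pose proof (atan_bound b).
  assert (atan b - atan a <= PI) by lra. nra.
Qed.

Lemma qf_cont x : continuous qf x.
Proof. apply cont_of_der. eexists. apply (gauss_der (120 :: nil)). Qed.

Lemma qf_upper y : qf y <= 120 / (1 + y^2).
Proof.
  unfold qf, gauss; simpl.
  replace ((120 + y * 0) * exp (- (y * y))) with (120 * / exp (y * y)) by (rewrite exp_Ropp; ring).
  unfold Rdiv. apply Rmult_le_compat_l. lra.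
  apply Rinv_le_contravar. nra. pose proof (exp_ineq1_le (y*y)). simpl; lra.
Qed.

Lemma qf_lower y : Rabs y <= 2 -> 4/3 <= qf y.
Proof.
  intros Hy. unfold qf, gauss; simpl.
  assert (Hyy : y * y <= 4).
  { assert (y * y = Rabs y * Rabs y) by (rewrite <- Rabs_mult, Rabs_pos_eq; nra).
    pose proof (Rabs_pos y). nra. }
  assert (H4 : exp 4 <= 81).
  { replace 4 with (INR 4 * 1) by (simpl; ring). rewrite exp_pow_nat.
    pose proof exp_le_3. pose proof (exp_pos 1).
    assert (exp 1 ^ 4 <= 3 ^ 4) by (apply pow_incr; lra). simpl in *; lra. }
  assert (exp (-(4)) <= exp (- (y*y))) by (apply exp_le_mono; lra).
  rewrite (exp_Ropp 4) in H. assert (/ exp 4 >= / 81).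
  { apply Rle_ge, Rinv_le_contravar. apply exp_pos. auto. }
  replace (120 + y * 0) with 120 by ring. lra.
Qed.

Lemma smooth_d1 f x : smooth f -> is_derive f x (Derive f x).
Proof. intros H. apply Derive_correct. exact (H 1%nat x). Qed.
Lemma smooth_d2 f x : smooth f -> is_derive (Derive f) x (Derive (Derive f) x).
Proof. intros H. apply Derive_correct. exact (H 2%nat x). Qed.

Lemma large_case N b f X A1 Y : smooth f -> 0 < X -> 0 < Y -> 4 * A1 <= Y -> f 0 = 0 -> Derive f 0 = X ->
  (forall y, Rabs y <= 2 -> Rabs (Derive (Derive f) y) <= A1 * X / Y) ->
  RInt (fun y => hN N b (f y)) (-1) 1 <= RInt (fun y => qf y * hN N b (X * y)) (-2) 2.
Proof.
  intros Hf HX HY HA f0 Df0 Hd.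
  set (h := hN N b).
  assert (hc : forall u, continuous h u) by (intros; apply cont_hN).
  assert (hp : forall u, 0 <= h u) by (intros; apply hN_nonneg).
  assert (fc : forall x, continuous f x) by (intros; apply cont_of_der; eexists; apply smooth_d1; auto).
  assert (dfc : forall x, continuous (Derive f) x) by (intros; apply cont_of_der; eexists; apply smooth_d2; auto).
  assert (A1p : A1 * X / Y <= X / 4).
  { unfold Rdiv. apply (Rmult_le_reg_r Y); auto. rewrite !Rmult_assoc, Rinv_l by lra. nra. }
  assert (Hdf : forall y, Rabs y <= 1 -> 3 * X / 4 <= Derive f y <= 5 * X / 4).
  { intros y Hy.
    destruct (MVT_cor4 (Derive f) (Derive (Derive f)) 0 2) with (b := y) as [c [Hc1 Hc2]].
    - intros c _. apply smooth_d2; auto.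
    - rewrite Rminus_0_r; lra.
    - rewrite !Rminus_0_r in *. rewrite Df0 in Hc1.
      assert (Rabs c <= 2) by lra. specialize (Hd c H).
      assert (Rabs (Derive f y - X) <= X / 4).
      { rewrite Hc1, Rabs_mult. pose proof (Rabs_pos (Derive (Derive f) c)).
        assert (Rabs (Derive (Derive f) c) * Rabs y <= (X/4) * 1) by (apply Rmult_le_compat; try apply Rabs_pos; lra).
        lra. }
      apply Rabs_le_between in H0. lra. }
  assert (Hf1 : 3 * X / 4 <= f 1 <= 5 * X / 4).
  { destruct (MVT_cor4 f (Derive f) 0 1) with (b := 1) as [c [Hc1 Hc2]].
    - intros c _. apply smooth_d1; auto.
    - rewrite Rminus_0_r, Rabs_R1; lra.
    - rewrite f0, !Rminus_0_r in *. rewrite Rabs_R1 in Hc2.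
      specialize (Hdf c Hc2). rewrite Hc1. lra. }
  assert (Hfm1 : - (5 * X / 4) <= f (-1) <= - (3 * X / 4)).
  { destruct (MVT_cor4 f (Derive f) 0 1) with (b := -1) as [c [Hc1 Hc2]].
    - intros c _. apply smooth_d1; auto.
    - rewrite Rminus_0_r; unfold Rabs; destruct (Rcase_abs _); lra.
    - rewrite f0, !Rminus_0_r in *.
      assert (Hc3 : Rabs c <= 1) by (eapply Rle_trans; [exact Hc2| unfold Rabs; destruct (Rcase_abs _); lra]).
      specialize (Hdf c Hc3). rewrite Hc1. lra. }
  assert (hfc : forall x, continuous (fun y => h (f y)) x).
  { intros x. apply (continuous_comp f h). apply fc. apply hc. }
  assert (g1c : forall x, continuous (fun y => Derive f y * h (f y)) x).
  { intros x. apply (continuous_mult (Derive f) (fun y => h (f y))). apply dfc. apply hfc. }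
  assert (S1 : RInt (fun y => h (f y)) (-1) 1 <= RInt (fun y => (4 / (3 * X)) * (Derive f y * h (f y))) (-1) 1).
  { apply RInt_le. lra. apply ex_RInt_cont; auto.
    apply ex_RInt_cont. intros x. apply (continuous_mult (fun _ => 4 / (3 * X)) (fun y => Derive f y * h (f y))).
    apply continuous_const. apply g1c.
    intros x Hx. assert (Rabs x <= 1) by (apply Rabs_le; lra). specialize (Hdf x H).
    specialize (hp (f x)).
    assert (1 <= 4 / (3 * X) * Derive f x).
    { unfold Rdiv. rewrite Rinv_mult. apply (Rmult_le_reg_l (3 * X)). lra.
      replace (3 * X * (4 * (/ 3 * / X) * Derive f x)) with (4 * Derive f x) by (field; lra). lra. }
    nra. }
  rewrite RInt_scal_R in S1 by (apply ex_RInt_cont; auto).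
  assert (S3 : RInt (fun y => Derive f y * h (f y)) (-1) 1 = RInt h (f (-1)) (f 1)).
  { apply (@RInt_comp R_CompleteNormedModule h f (Derive f)).
    - intros x _. apply hc.
    - intros x _. split. apply smooth_d1; auto. apply dfc. }
  rewrite S3 in S1.
  assert (S4 : RInt h (f (-1)) (f 1) <= RInt h (-2 * X) (2 * X)).
  { rewrite <- (RInt_Chasles_R h (-2 * X) (f (-1)) (2 * X)) by auto.
    rewrite <- (RInt_Chasles_R h (f (-1)) (f 1) (2 * X)) by auto.
    assert (0 <= RInt h (-2 * X) (f (-1))) by (apply RInt_ge_0; [lra| apply ex_RInt_cont; auto| intros; auto]).
    assert (0 <= RInt h (f 1) (2 * X)) by (apply RInt_ge_0; [lra| apply ex_RInt_cont; auto| intros; auto]).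
    lra. }
  assert (S5 : RInt h (-2 * X) (2 * X) = X * RInt (fun v => h (X * v)) (-2) 2).
  { rewrite <- RInt_scal_R.
    2:{ apply ex_RInt_cont. intros x. apply (continuous_comp (fun v => X * v) h). apply cont_of_der; auto_derive; auto. apply hc. }
    pose proof (@RInt_comp_lin R_CompleteNormedModule h X 0 (-2) 2 (ex_RInt_cont h _ _ hc)) as E.
    replace (X * -2 + 0) with (-2 * X) in E by ring. replace (X * 2 + 0) with (2 * X) in E by ring.
    rewrite <- E. apply RInt_ext. intros x _. rewrite Rplus_0_r. reflexivity. }
  assert (hXc : forall x, continuous (fun v => h (X * v)) x).
  { intros x. apply (continuous_comp (fun v => X * v) h). apply cont_of_der; auto_derive; auto. apply hc. }
  assert (S6 : 4 / 3 * RInt (fun v => h (X * v)) (-2) 2 <= RInt (fun y => qf y * h (X * y)) (-2) 2).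
  { rewrite <- RInt_scal_R by (apply ex_RInt_cont; auto).
    apply RInt_le. lra.
    apply ex_RInt_cont. intros x. apply (continuous_mult (fun _ => 4/3) (fun v => h (X * v))). apply continuous_const. apply hXc.
    apply ex_RInt_cont. intros x. apply (continuous_mult qf (fun v => h (X * v))). apply qf_cont. apply hXc.
    intros x Hx. assert (Rabs x <= 2) by (apply Rabs_le; lra).
    pose proof (qf_lower x H). specialize (hp (X * x)). nra. }
  assert (0 < 4 / (3 * X)) by (apply Rdiv_lt_0_compat; lra).
  assert (S1' : RInt (fun y => h (f y)) (-1) 1 <= 4 / (3 * X) * RInt h (-2 * X) (2 * X)) by nra.
  rewrite S5 in S1'.
  replace (4 / (3 * X) * (X * RInt (fun v => h (X * v)) (-2) 2)) with (4 / 3 * RInt (fun v => h (X * v)) (-2) 2) in S1' by (field; lra).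
  lra.
Qed.

Theorem lemma7p4 :
  forall (eps : R), 0 < eps ->
  forall (A : nat -> R),  (* implied constants: |f^(j+1)(y)| <= A j * X * Y^-j *)
  exists q : R -> R,
    (forall x, 0 <= q x) /\ schwartz q /\
    (forall (j : nat) (Cc : R), exists K, forall x,
        Rabs (x ^ j * Derive_n q j x) <= K * Rpower (1 + Rabs x) (- Cc)) /\
    exists K0 : R,
      forall (N : nat) (b : nat -> C) (f : R -> R) (X Y : R),
        (1 <= N)%nat -> smooth f -> 0 < X -> Rpower (INR N) eps <= Y ->
        f 0 = 0 -> Derive f 0 = X ->
        (forall (j : nat) (y : R), (1 <= j)%nat -> Rabs y <= 2 ->
            Rabs (Derive_n f (S j) y) <= A j * X / Y ^ j) ->
        exists I : R,
          is_RInt_gen (fun y => q y * (Cmod (expsum N b (X * y)))^2)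
                      (Rbar_locally m_infty) (Rbar_locally p_infty) I /\
          RInt (fun y => (Cmod (expsum N b (f y)))^2) (-1) 1
            <= I + K0 * / (INR N) ^ 100 * l2sq N b.
Proof.
  intros eps Heps A. exists qf.
  split. apply qf_nonneg. split. apply qf_schwartz. split. apply qf_decay.
  set (Z := Rmax 1 (4 * A 1%nat)).
  exists (2 * Rpower Z (101 / eps)).
  intros N b f X Y HN Hf HX HY f0 Df0 Hd.
  assert (HNpos : 1 <= INR N) by (apply (le_INR 1); auto).
  assert (HYpos : 0 < Y) by (eapply Rlt_le_trans; [|exact HY]; apply exp_pos).
  set (h := hN N b).
  set (B := INR N * L2 b N).
  assert (HL : 0 <= L2 b N) by apply L2_nonneg.
  assert (HB : 0 <= B) by (unfold B; nra).
  assert (hc : forall u, continuous h u) by (intros; apply cont_hN).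
  assert (hp : forall u, 0 <= h u) by (intros; apply hN_nonneg).
  assert (hB : forall u, h u <= B) by (intros; apply hN_CS).
  set (F := fun y => qf y * h (X * y)).
  assert (Fc : forall x, continuous F x).
  { intros x. apply (continuous_mult qf (fun v => h (X * v))). apply qf_cont.
    apply (continuous_comp (fun v => X * v) h). apply cont_of_der; auto_derive; auto. apply hc. }
  assert (Fp : forall x, 0 <= F x) by (intros; unfold F; pose proof (qf_nonneg x); specialize (hp (X*x)); nra).
  destruct (full_int F (120 * B * PI)) as [I [HI HIle]]; auto.
  { intros a b0 Hab. apply int_bound; auto.
    pose proof PI_RGT_0. nra.
    intros y. unfold F. pose proof (qf_upper y). pose proof (qf_nonneg y). specialize (hp (X*y)). specialize (hB (X*y)).
    replace (120 * B / (1 + y^2)) with (B * (120 / (1 + y^2))) by (field; pose proof (pow2_ge_0 y); lra).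
    rewrite Rmult_comm. apply Rmult_le_compat; auto. lra. }
  exists I.
  assert (E1 : (fun y => qf y * Cmod (expsum N b (X * y)) ^ 2) = F).
  { apply functional_extensionality. intros y. unfold F, h. rewrite hN_eq. reflexivity. }
  assert (E2 : (fun y => Cmod (expsum N b (f y)) ^ 2) = (fun y => h (f y))).
  { apply functional_extensionality. intros y. unfold h. rewrite hN_eq. reflexivity. }
  rewrite E1, E2. split. exact HI.
  rewrite l2sq_eq.
  assert (HI0 : 0 <= I).
  { eapply Rle_trans; [|apply (HIle 0 0); lra]. rewrite RInt_point. unfold zero; simpl; lra. }
  assert (HZ : 1 <= Z) by apply Rmax_l.
  assert (HRp : 0 < Rpower Z (101 / eps)) by apply exp_pos.
  assert (HNp : 0 < INR N ^ 100) by (apply pow_lt; lra).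
  assert (Herr : 0 <= 2 * Rpower Z (101 / eps) * / INR N ^ 100 * L2 b N).
  { apply Rmult_le_pos; auto. apply Rmult_le_pos. lra. left; apply Rinv_0_lt_compat; auto. }
  destruct (Rle_dec (4 * A 1%nat) Y) as [Hlarge|Hsmall].
  -
    assert (L1 : RInt (fun y => h (f y)) (-1) 1 <= RInt F (-2) 2).
    { apply (large_case N b f X (A 1%nat) Y); auto.
      intros y Hy. specialize (Hd 1%nat y (le_n 1) Hy). simpl in Hd. rewrite Rmult_1_r in Hd. exact Hd. }
    assert (RInt F (-2) 2 <= I) by (apply HIle; lra).
    lra.
  - (* small Y: N bounded *)
    assert (L1 : RInt (fun y => h (f y)) (-1) 1 <= 2 * B).
    { eapply Rle_trans. apply RInt_le. lra.
      apply ex_RInt_cont. intros x. apply (continuous_comp f h).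
      apply cont_of_der; eexists; apply smooth_d1; auto. apply hc.
      apply ex_RInt_cont. intros; apply continuous_const.
      intros x _. apply (hB (f x)).
      rewrite RInt_const. unfold scal; simpl; unfold mult; simpl. lra. }
    assert (HNb : INR N ^ 101 <= Rpower Z (101 / eps)).
    { assert (E101 : INR 101 = 101) by (rewrite INR_IZR_INZ; reflexivity).
      rewrite <- Rpower_pow by lra. rewrite E101.
      replace 101 with (eps * (101 / eps)) at 1 by (field; lra).
      rewrite <- Rpower_mult. apply Rle_Rpower_l. apply Rlt_le, Rdiv_lt_0_compat; lra.
      split. apply exp_pos. eapply Rle_trans. exact HY. unfold Z.
      eapply Rle_trans; [|apply Rmax_r]. lra. }
    assert (2 * B <= 2 * Rpower Z (101 / eps) * / INR N ^ 100 * L2 b N).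
    { unfold B. replace (2 * Rpower Z (101 / eps) * / INR N ^ 100 * L2 b N) with
        (2 * (Rpower Z (101 / eps) / INR N ^ 100) * L2 b N) by (unfold Rdiv; ring).
      assert (INR N <= Rpower Z (101 / eps) / INR N ^ 100).
      { apply (Rmult_le_reg_r (INR N ^ 100)); auto. unfold Rdiv.
        rewrite Rmult_assoc, Rinv_l by lra. rewrite Rmult_1_r.
        replace (INR N * INR N ^ 100) with (INR N ^ 101) by (simpl; ring). exact HNb. }
      nra. }
    lra.
Qed.
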